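(* Let $\mathcal{A}$ be a unital algebra generated by two unital subalgebras $\mathcal{A}_1,\mathcal{A}_2$. Let $\mathcal{I}_1$ (resp. $\mathcal{I}_2$) be an ideal of $\mathcal{A}_1$ (resp. $\mathcal{A}_2$) and $\mathcal{I}$ the ideal of $\mathcal{A}$ generated by $\mathcal{I}_1\cup \mathcal{I}_2$. Let $\tau: \mathcal{A}\to \mathbb{C}$ be a unital linear functional with $\mathcal{I}\subset \ker(\tau)$ and $\tau': \mathcal{I}\to \mathbb{C}$ a linear functional such that $(\mathcal{A}_1,\mathcal{I}_1)$ and $(\mathcal{A}_2,\mathcal{I}_2)$ are free of type $B$ in $(\mathcal{A},\tau,\mathcal{I},\tau')$. Let $p\in \mathcal{I}_1$ with $\tau'(p)\neq 0$ and define $\varphi:\mathcal{A}\to \mathbb{C}$ by $\varphi(a)=\frac{1}{\tau'(p)}\tau'(p a)$. Then $\varphi$ coincides with $\tau$ on $\mathcal{A}_2$, and $\mathcal{A}_1,\mathcal{A}_2$ are conditionally free with respect to $(\tau,\varphi)$.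
   Context: Freeness of type $B$ in $(\mathcal{A},\tau,\mathcal{I},\tau')$ for $(\mathcal{A}_1,\mathcal{I}_1)$, $(\mathcal{A}_2,\mathcal{I}_2)$: $\mathcal{A}_1,\mathcal{A}_2$ are free w.r.t. $\tau$, and whenever $a_n\in\mathcal{A}_{i_n},\dots,a_1\in\mathcal{A}_{i_1}$, $v\in\mathcal{I}_h$, $b_1\in\mathcal{A}_{j_1},\dots,b_m\in\mathcal{A}_{j_m}$ with any two consecutive indices in $i_n,\dots,i_1,h,j_1,\dots,j_m$ different and all $a_r,b_s$ centered for $\tau$, $\tau'(a_n\cdots a_1vb_1\cdots b_m)=\tau(a_nb_m)\cdots\tau(a_1b_1)\tau'(v)$ if $n=m$ and $i_r=j_r$ for all $r$, and $=0$ otherwise. Conditional freeness w.r.t. $(\tau,\varphi)$: whenever $n>1$, $a_j\in\mathcal{A}_{i_j}$ with consecutive indices different and $\tau(a_j)=0$ for all $j$, $\tau(a_1\cdots a_n)=0$ and $\varphi(a_1\cdots a_n)=\varphi(a_1)\cdots\varphi(a_n)$. *)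

(* Defs.v *)
From mathcomp Require Import all_boot all_algebra complex.
From mathcomp Require Import reals.
Set Implicit Arguments. Unset Strict Implicit. Unset Printing Implicit Defensive.
Import GRing.Theory.
Local Open Scope ring_scope.

Section Defs.
Variables (R : realType) (A : algType R[i]).

Definition is_ideal_of (S J : {pred A}) : Prop :=
  [/\ {subset J <= S}, submod_closed J &
      forall a x, a \in S -> x \in J -> a * x \in J /\ x * a \in J].

Definition generates (S1 S2 : {pred A}) : Prop :=
  forall S : {pred A}, subalg_closed S ->
    {subset S1 <= S} -> {subset S2 <= S} -> forall x : A, x \in S.

Definition gen_ideal (J1 J2 I : {pred A}) : Prop :=
  [/\ is_ideal_of predT I, {subset J1 <= I}, {subset J2 <= I} &
      forall J : {pred A}, is_ideal_of predT J ->
        {subset J1 <= J} -> {subset J2 <= J} -> {subset I <= J}].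

(* Words: letters (b, a) with b = false meaning index 1, b = true index 2. *)
Definition pick2 (X1 X2 : {pred A}) (b : bool) : {pred A} := if b then X2 else X1.

Fixpoint alternating (s : seq (bool * A)) : bool :=
  match s with
  | x :: ((y :: _) as t) => (x.1 != y.1) && alternating t
  | _ => true
  end.

Definition wprod (s : seq (bool * A)) : A := \prod_(q <- s) q.2.

Definition in_subalgs (A1 A2 : {pred A}) (s : seq (bool * A)) : bool :=
  all (fun q => q.2 \in pick2 A1 A2 q.1) s.

Definition centered (tau : A -> R[i]) (s : seq (bool * A)) : Prop :=
  forall q, q \in s -> tau q.2 = 0.

Definition free_wrt (A1 A2 : {pred A}) (tau : A -> R[i]) : Prop :=
  forall s : seq (bool * A), (0 < size s)%N -> alternating s ->
    in_subalgs A1 A2 s -> centered tau s -> tau (wprod s) = 0.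

(* Freeness of type B for (A1,I1), (A2,I2) in (A, tau, I, tau').
   sa = [:: (i_n,a_n); ...; (i_1,a_1)], sb = [:: (j_1,b_1); ...; (j_m,b_m)]. *)
Definition free_typeB (A1 A2 I1 I2 : {pred A}) (tau tau' : A -> R[i]) : Prop :=
  free_wrt A1 A2 tau /\
  forall (sa sb : seq (bool * A)) (h : bool) (v : A),
    alternating (sa ++ (h, v) :: sb) ->
    in_subalgs A1 A2 sa -> in_subalgs A1 A2 sb -> v \in pick2 I1 I2 h ->
    centered tau sa -> centered tau sb ->
    tau' (wprod sa * v * wprod sb) =
      if map fst (rev sa) == map fst sb
      then (\prod_(q <- zip (rev sa) sb) tau (q.1.2 * q.2.2)) * tau' v
      else 0.

Definition cond_free (A1 A2 : {pred A}) (tau phi : A -> R[i]) : Prop :=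
  forall s : seq (bool * A), (1 < size s)%N -> alternating s ->
    in_subalgs A1 A2 s -> centered tau s ->
    tau (wprod s) = 0 /\ phi (wprod s) = \prod_(q <- s) phi q.2.

End Defs.

(* Main.v *)
Require Import Defs.
From mathcomp Require Import all_boot all_algebra complex.
From mathcomp Require Import reals.
Import GRing.Theory.
Local Open Scope ring_scope.

Theorem proposition2p12 (R : realType) (A : algType R[i])
  (A1 A2 I1 I2 I : {pred A}) (tau tau' : A -> R[i]) (p : A) :
  subalg_closed A1 -> subalg_closed A2 -> generates A1 A2 ->
  is_ideal_of A1 I1 -> is_ideal_of A2 I2 -> gen_ideal I1 I2 I ->
  (forall (c : R[i]) (x y : A), tau (c *: x + y) = c * tau x + tau y) ->
  tau 1 = 1 ->
  (forall x, x \in I -> tau x = 0) ->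
  (forall (c : R[i]) (x y : A), x \in I -> y \in I ->
     tau' (c *: x + y) = c * tau' x + tau' y) ->
  free_typeB A1 A2 I1 I2 tau tau' ->
  p \in I1 -> tau' p != 0 ->
  let phi := fun a : A => (tau' p)^-1 * tau' (p * a) in
  (forall a, a \in A2 -> phi a = tau a) /\ cond_free A1 A2 tau phi.
Proof.
move=> [S1_1 S1lin S1mul] [S2_1 S2lin S2mul] _ [I1sub _ I1id] _
  [[_ _ Iid] I1I _ _] taulin tau1 _ tau'lin [tfree tB] pI1 tp0 phi.
have part1 : forall a, a \in A2 -> phi a = tau a.
  move=> a aA2; set c := tau a.
  set ao := (- c) *: 1 + a.
  have aoA2 : ao \in A2 by apply: S2lin.
  have aoc : tau ao = 0 by rewrite /ao taulin tau1 mulr1 addNr.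
  have pI : p \in I by apply: I1I.
  have paoI : p * ao \in I by have [] := Iid ao p isT pI.
  have E : p * a = c *: p + p * ao.
    by rewrite /ao mulrDr -scalerAr mulr1 addrA scaleNr addrN add0r.
  have H0 : tau' (p * ao) = 0.
    have := tB [::] [:: (true, ao)] false p isT isT _ pI1 _ _.
    rewrite /wprod big_nil mul1r big_cons big_nil mulr1 /=.
    apply => //=; [by rewrite aoA2 | by move=> q; rewrite inE => /eqP ->].
  rewrite /phi E tau'lin // H0 addr0 mulrA mulrC mulrA mulrV ?mul1r //.
split => //.
move=> s s1 alt ins cen; split; first by apply: tfree => //; apply: ltnW.
have Hl : tau' (p * wprod s) = 0.
  case: s s1 alt ins cen => [//|[b a1] t] s1 alt ins cen.
  case: b s1 alt ins cen => s1 alt ins cen.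
  - have := tB [::] ((true, a1) :: t) false p _ isT ins pI1 _ cen.
    rewrite /wprod big_nil mul1r /= => -> //.
  - move: ins => /= /andP [a1A1 tin].
    have pa1 : p * a1 \in I1 by have [] := I1id a1 p a1A1 pI1.
    have cent : centered tau t.
      by move=> q qt; apply: cen; rewrite inE qt orbT.
    have := tB [::] t false (p * a1) _ isT tin pa1 _ cent.
    rewrite /wprod big_nil mul1r big_cons mulrA /=.
    case: t s1 alt {tin cen cent} => [//|y t'] _ alt.
    by apply => //; move=> q; rewrite inE.
rewrite /phi Hl mulr0; apply/esym; clear Hl.
case: s s1 alt ins cen => [//|[b1 x1] [//|[b2 x2] t]] _ /= /andP [ne _]
  /and3P [i1 i2 _] cen.
rewrite !big_cons.
have c1 : tau x1 = 0 by apply: (cen (b1, x1)); rewrite inE eqxx.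
have c2 : tau x2 = 0 by apply: (cen (b2, x2)); rewrite !inE eqxx orbT.
clear cen; case: b1 b2 ne i1 i2 => [] [] //= _ i1 i2.
- have e1 := part1 x1 i1. rewrite c1 /phi in e1. rewrite e1 mul0r //.
- have e2 := part1 x2 i2. rewrite c2 /phi in e2. rewrite e2 mul0r mulr0 //.
Qed.
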